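(* Let $\mathcal{A}=(Q,\delta,s)$ be a quasi-Wheeler NFA (satisfying the standing assumptions below), let $\mathcal{P}'$ be its coarsest forward-stable partition and $\mathcal{A}'=\mathcal{A}/_{\mathcal{P}'}$ the quotient automaton. Run the Ordered Partition Refinement algorithm described below on $\mathcal{A}$. Then at any step of the algorithm, the current ordered partition $\mathcal{P}=\langle Q_1,\dots,Q_k\rangle$ agrees with every Wheeler order $\prec$ of $\mathcal{A}'$: if $i<j$, $u\in Q_i$ and $v\in Q_j$, then $[u]_{\mathcal{P}'}\prec[v]_{\mathcal{P}'}$ for every Wheeler order $\prec$ of $\mathcal{A}'$.
   Context: $\Sigma=\{a_1<\dots<a_k\}$ is a finite totally ordered alphabet. NFA $\mathcal{A}=(Q,\delta,s)$, $\delta:Q\times\Sigma\to2^Q$, $\delta_a(u)=\delta(u,a)$, $\delta_a(T)=\bigcup_{u\in T}\delta_a(u)$. Standing assumptions: $s$ has no incoming transitions, every state is reachable from $s$, every $v\neq s$ has incoming transitions labeled by exactly one letter $\lambda(v)$, and every letter labels some transition. A partition of $Q$ is forward-stable if for any parts $S,T$ and every $a$, $S\subseteq\delta_a(T)$ or $S\cap\delta_a(T)=\emptyset$; the coarsest one is the forward-stable partition with fewest parts. For a partition $\mathcal{P}'$, $[u]_{\mathcal{P}'}$ is the part containing $u$, and the quotient NFA $\mathcal{A}/_{\mathcal{P}'}$ has the parts as states, source $[s]$, and $[v]\in\delta'_a([u])$ iff some $v'\in[v]$ lies in $\delta_a(u')$ for some $u'\in[u]$. A Wheeler order of an NFA $(Q,\delta,s)$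 is a strict total order $\prec$ on $Q$ with $s\prec v$ for $v\neq s$ such that for all $v\in\delta_a(u)$, $v'\in\delta_{a'}(u')$: if $a<a'$ then $v\prec v'$; if $a=a'$, $u\prec u'$, $v\neq v'$ then $v\prec v'$. A total preorder $\preceq$ on $Q$ is a Wheeler preorder if its equivalence classes form the coarsest forward-stable partition and the induced strict order on classes is a Wheeler order of the quotient; $\mathcal{A}$ is quasi-Wheeler if it has a Wheeler preorder. Algorithm (Ordered Partition Refinement): let $Q_\epsilon=\{s\}$, $Q_a=\{v:\lambda(v)=a\}$. Initialize $\mathcal{P}:=\langle Q_\epsilon,Q_{a_1},\dots,Q_{a_k}\rangle$, $\mathcal{X}:=\langle Q\rangle$. While $\mathcal{X}\neq\mathcal{P}$: let $S$ be the first part of $\mathcal{X}$ that is a union of at least two parts of $\mathcal{P}$; let $B$ be the smaller (in cardinality) of the first and last part of $\mathcal{P}$ contained in $S$; replace $S$ in $\mathcal{X}$ by $B,S\setminus B$ if $B$ was the first such part, else by $S\setminus B,B$. For each part $D$ of $\mathcal{P}$ present before this step, with $a=\lambda(D)$ (for $\{s\}$ take $D_1=\emptyset$): $D_1:=D\cap\delta_a(B)$, $D_2:=D\setminus D_1$, $D_{11}:=D_1\cap\delta_a(S\setminus B)$, $D_{12}:=D_1\setminus D_{11}$; replace $D$ by the nonempty sets among $D_{12},D_{11},D_2$ (in this order) if $B$ was first, else among $D_2,D_{11},D_{12}$ (in this order). Return $\mathcal{P}$. *)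

(* Defs.v *)
From mathcomp Require Import all_boot.
Set Implicit Arguments.
Unset Strict Implicit.
Unset Printing Implicit Defensive.

(* Alphabet Sigma = 'I_k = {a_1 < ... < a_k}, ordered by the natural order. *)

Section Wheeler.
Variable k : nat.

(* Wheeler order of an NFA whose states are the elements of D : {set T},
   with transition function d and source s0 (prec is only looked at on D). *)
Definition wheeler_order (T : finType) (D : {set T})
    (d : T -> 'I_k -> {set T}) (s0 : T) (prec : rel T) : Prop :=
  [/\ (forall x, x \in D -> ~~ prec x x),
      (forall x y z, x \in D -> y \in D -> z \in D ->
          prec x y -> prec y z -> prec x z),
      (forall x y, x \in D -> y \in D -> x != y -> prec x y || prec y x),
      (forall v, v \in D -> v != s0 -> prec s0 v) &
      (forall (u u' v v' : T) (a a' : 'I_k), u \in D -> u' \in D ->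
          v \in d u a -> v' \in d u' a' ->
          ((a < a')%N -> prec v v') /\
          (a = a' -> prec u u' -> v != v' -> prec v v'))].
End Wheeler.

Section NFA.
Variables (k : nat) (Q : finType) (delta : Q -> 'I_k -> {set Q}) (s : Q).

Definition dset (a : 'I_k) (T : {set Q}) : {set Q} := \bigcup_(u in T) delta u a.

Definition edge : rel Q := fun u v => [exists a, v \in delta u a].

Definition standing_assumptions : Prop :=
  [/\ (forall u a, s \notin delta u a),
      (forall v, connect edge s v),
      (forall v, v != s -> #|[set a | [exists u, v \in delta u a]]| = 1) &
      (forall a, exists u v, v \in delta u a)].

Definition forward_stable (P : {set {set Q}}) : Prop :=
  forall S T, S \in P -> T \in P -> forall a,
    S \subset dset a T \/ [disjoint S & dset a T].

Definition coarsest_fsp (P : {set {set Q}}) : Prop :=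
  [/\ partition P [set: Q], forward_stable P &
      forall P2 : {set {set Q}}, partition P2 [set: Q] -> forward_stable P2 ->
        #|P| <= #|P2| ].

(* Quotient NFA A/P: states are the parts of P, source [s]_P = pblock P s. *)
Definition qdelta (P : {set {set Q}}) (X : {set Q}) (a : 'I_k) : {set {set Q}} :=
  [set Y in P | [exists u in X, exists v in Y, v \in delta u a]].

Definition wheeler_order_quotient (P : {set {set Q}}) (prec : rel {set Q}) : Prop :=
  wheeler_order P (qdelta P) (pblock P s) prec.

Definition pre_classes (le : rel Q) : {set {set Q}} :=
  [set [set y | le x y && le y x] | x : Q].

Definition induced_strict (le : rel Q) : rel {set Q} :=
  fun X Y => [exists x in X, exists y in Y, le x y && ~~ le y x].

Definition wheeler_preorder (le : rel Q) : Prop :=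
  [/\ reflexive le, transitive le, total le,
      coarsest_fsp (pre_classes le) &
      wheeler_order_quotient (pre_classes le) (induced_strict le)].

Definition quasi_wheeler : Prop := exists le : rel Q, wheeler_preorder le.

(* lambda(v): the unique letter labelling incoming edges (None for s). *)
Definition lab (v : Q) : option 'I_k := [pick a | [exists u, v \in delta u a]].

(* lambda(D) for a part D (all its elements share the label). *)
Definition plab (D : {set Q}) : option 'I_k :=
  if [pick x in D] is Some x then lab x else None.

(* delta_{lambda(D)}(T), and the empty set when D = {s} *)
Definition dlab (D T : {set Q}) : {set Q} :=
  if plab D is Some a then dset a T else set0.

Definition opr_state := (seq {set Q} * seq {set Q})%type.

Definition opr_init : opr_state :=
  ([set s] :: [seq [set v | lab v == Some a] | a <- enum 'I_k], [:: [set: Q]]).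

Definition multi (P : seq {set Q}) (S : {set Q}) : bool :=
  (\bigcup_(D <- P | (D : {set Q}) \subset S) D == S) && (1 < count (fun D : {set Q} => D \subset S) P).

Definition split_part (bfirst : bool) (B S D : {set Q}) : seq {set Q} :=
  let D1 := D :&: dlab D B in
  let D2 := D :\: D1 in
  let D11 := D1 :&: dlab D (S :\: B) in
  let D12 := D1 :\: D11 in
  filter (fun E => E != set0)
    (if bfirst then [:: D12; D11; D2] else [:: D2; D11; D12]).

(* One iteration of the while loop; bfirst records whether B is the first
   part of P contained in S (ties in cardinality: either choice allowed). *)
Definition opr_step (st st' : opr_state) : Prop :=
  let: (P, X) := st in
  exists bfirst : bool,
    let i := find (multi P) X in
    let S := nth set0 X i in
    let C := filter (fun D : {set Q} => D \subset S) P in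
    let F := head set0 C in
    let L := last set0 C in
    let B := if bfirst then F else L in
    [/\ X != P, i < size X,
        (if bfirst then #|F| <= #|L| else #|L| <= #|F|) &
        st' = (flatten [seq split_part bfirst B S D | D <- P],
               take i X ++ (if bfirst then [:: B; S :\: B] else [:: S :\: B; B])
                        ++ drop i.+1 X)].

Inductive opr_reach : opr_state -> Prop :=
  | opr_reach_init : opr_reach opr_init
  | opr_reach_step st st' : opr_reach st -> opr_step st st' -> opr_reach st'.

End NFA.

(* Main.v *)
Require Import Defs.
From mathcomp Require Import all_boot.
Set Implicit Arguments. Unset Strict Implicit. Unset Printing Implicit Defensive.

Section L11.
Variables (k : nat) (Q : finType) (delta : Q -> 'I_k -> {set Q}) (s : Q).
Hypothesis HSA : standing_assumptions delta s.
Variable P' : {set {set Q}}.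
Hypothesis HP : partition P' [set: Q].
Hypothesis HFS : forward_stable delta P'.
Variable prec : rel {set Q}.
Hypothesis HW : wheeler_order_quotient delta s P' prec.

Local Notation cls := (pblock P').

Lemma cover_all x : x \in cover P'.
Proof. by case/and3P: HP => /eqP -> _ _; rewrite inE. Qed.

Lemma cls_mem x : x \in cls x.
Proof. by rewrite mem_pblock cover_all. Qed.

Lemma cls_in x : cls x \in P'.
Proof. exact: pblock_mem (cover_all x). Qed.

Lemma triv : trivIset P'.
Proof. by case/and3P: HP. Qed.

Lemma cls_eq x y : y \in cls x -> cls y = cls x.
Proof. exact: same_pblock triv. Qed.

Definition closed (T : {set Q}) := forall x y, x \in T -> cls x = cls y -> y \in T.

Lemma dset_closed T a x y : closed T -> cls x = cls y ->
  x \in dset delta a T -> y \in dset delta a T.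
Proof.
move=> cT exy /bigcupP [u uT xu].
have [sub|dis] := HFS (cls_in x) (cls_in u) a.
  have : y \in dset delta a (cls u) by apply: (subsetP sub); rewrite exy cls_mem.
  case/bigcupP => u' u'u yu'. apply/bigcupP; exists u' => //.
  by apply: (cT u) => //; rewrite (cls_eq u'u).
exfalso; move: dis => /disjoint_setI0 /setP /(_ x).
by rewrite !inE cls_mem /=; move/negbT/negP; apply; apply/bigcupP; exists u => //; apply: cls_mem.
Qed.

Lemma closedT : closed [set: Q].
Proof. by move=> x y _ _; rewrite inE. Qed.

Lemma closedI A B : closed A -> closed B -> closed (A :&: B).
Proof. move=> cA cB x y; rewrite !inE => /andP[xA xB] e; by rewrite (cA x y) ?(cB x y). Qed.

Lemma closedD A B : closed A -> closed B -> closed (A :\: B).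
Proof.
move=> cA cB x y; rewrite !inE => /andP[xB xA] e; rewrite (cA x y) // andbT.
by apply/negP => yB; move/negP: xB; apply; apply: (cB y x).
Qed.

Lemma closed0 : closed set0.
Proof. by move=> x y; rewrite inE. Qed.

Lemma dset_closed_neq T a x y : closed T -> x \in dset delta a T -> y \notin dset delta a T ->
  cls x != cls y.
Proof. by move=> cT xT yT; apply/eqP => e; move/negP: yT; apply; apply: dset_closed e xT. Qed.

Lemma core x y p q a : x \in delta p a -> y \in delta q a -> prec (cls p) (cls q) ->
  cls x != cls y -> prec (cls x) (cls y).
Proof.
case: HW => _ _ _ _ H5 xp yq pq ne.
have := H5 (cls p) (cls q) (cls x) (cls y) a a (cls_in p) (cls_in q).
case=> //.
- rewrite inE cls_in /=; apply/exists_inP; exists p; first exact: cls_mem.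
  by apply/exists_inP; exists x => //; apply: cls_mem.
- rewrite inE cls_in /=; apply/exists_inP; exists q; first exact: cls_mem.
  by apply/exists_inP; exists y => //; apply: cls_mem.
by move=> _ /(_ erefl pq ne).
Qed.

Lemma core_set x y Lo Hi a : x \in dset delta a Lo -> y \in dset delta a Hi ->
  (forall p q, p \in Lo -> q \in Hi -> prec (cls p) (cls q)) ->
  cls x != cls y -> prec (cls x) (cls y).
Proof.
move=> /bigcupP[p pL xp] /bigcupP[q qH yq] H ne.
exact: core xp yq (H p q pL qH) ne.
Qed.

Lemma s_notin u a : s \notin delta u a.
Proof. by case: HSA. Qed.

Lemma lab_delta v u a : v \in delta u a -> lab delta v = Some a.
Proof.
move=> vu; case: HSA => _ _ H3 _.
have vs : v != s by apply: contraTneq vu => ->; apply: s_notin.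
have /eqP/cards1P [b eb] := H3 v vs.
have ab : a \in [set a | [exists u, v \in delta u a]].
  by rewrite inE; apply/existsP; exists u.
rewrite /lab; case: pickP => [c Hc|/(_ a) /negbT /existsPn /(_ u)]; last by rewrite vu.
have : c \in [set a | [exists u, v \in delta u a]] by rewrite inE.
by rewrite eb => /set1P ->; move: ab; rewrite eb => /set1P ->.
Qed.

Lemma lab_some v a : lab delta v = Some a -> exists u, v \in delta u a.
Proof.
rewrite /lab; case: pickP => // c /existsP [u Hu] [<-]; by exists u.
Qed.

Lemma lab_s : lab delta s = None.
Proof.
rewrite /lab; case: pickP => // c /existsP [u Hu]; by rewrite (negbTE (s_notin u c)) in Hu.
Qed.

Lemma has_pred v : v != s -> exists u a, v \in delta u a.
Proof.
move=> vs; case: HSA => _ H2 _ _.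
case/connectP: (H2 v) => p; case/lastP: p => [_ /= E|p z]; first by rewrite E eqxx in vs.
rewrite rcons_path last_rcons => /andP [_ /existsP [a Ha]] ->.
by exists (last s p), a.
Qed.

Lemma cls_s y : cls y = cls s -> y = s.
Proof.
move=> e; case: (eqVneq y s) => // ys; exfalso.
have [u [a yu]] := has_pred ys.
have [sub|dis] := HFS (cls_in y) (cls_in u) a.
  have : s \in dset delta a (cls u) by apply: (subsetP sub); rewrite e cls_mem.
  by case/bigcupP => u' _; rewrite (negbTE (s_notin _ _)).
move: dis => /disjoint_setI0 /setP /(_ y).
rewrite !inE cls_mem /= => /negbT/negP; apply; apply/bigcupP; exists u => //; apply: cls_mem.
Qed.


Definition rr (D E : {set Q}) : bool := [forall u in D, forall v in E, prec (cls u) (cls v)].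

Record Inv (P X : seq {set Q}) : Prop := {
  i_cov : forall y, exists2 D, D \in P & y \in D;
  i_U : forall D, D \in P -> forall x y, x \in D -> y \in D -> lab delta x = lab delta y;
  i_Dj : forall D E, D \in P -> E \in P -> forall y, y \in D -> y \in E -> D = E;
  i_R : forall D, D \in P -> closed D;
  i_RX : forall S, S \in X -> closed S;
  i_SX : forall S D, S \in X -> D \in P -> forall y, y \in S -> y \in D -> D \subset S;
  i_St : forall D S, D \in P -> S \in X -> forall x z a, x \in D -> z \in D ->
     lab delta x = Some a -> x \in dset delta a S -> z \in dset delta a S;
  i_O : pairwise rr P }.

Definition Qa (a : 'I_k) : {set Q} := [set v | lab delta v == Some a].

Lemma init_mem D : D \in [set s] :: [seq Qa a | a <- enum 'I_k] ->
  D = [set s] \/ exists a, D = Qa a.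
Proof. rewrite in_cons => /orP [/eqP ->|/mapP [a _ ->]]; [by left|by right; exists a]. Qed.

Lemma rr_s a : rr [set s] (Qa a).
Proof.
apply/forall_inP => u /set1P ->; apply/forall_inP => v; rewrite inE => /eqP lv.
case: HW => _ _ _ H4 _; apply: H4; first exact: cls_in.
apply/eqP => /cls_s vs; by rewrite vs lab_s in lv.
Qed.

Lemma rr_ab (a b : 'I_k) : a < b -> rr (Qa a) (Qa b).
Proof.
move=> ab; apply/forall_inP => u; rewrite inE => /eqP /lab_some [p up].
apply/forall_inP => v; rewrite inE => /eqP /lab_some [q vq].
case: HW => _ _ _ _ H5.
have := H5 (cls p) (cls q) (cls u) (cls v) a b (cls_in p) (cls_in q).
case=> [||H _]; last exact: H.
- rewrite inE cls_in /=; apply/exists_inP; exists p; first exact: cls_mem.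
  by apply/exists_inP; exists u => //; apply: cls_mem.
- rewrite inE cls_in /=; apply/exists_inP; exists q; first exact: cls_mem.
  by apply/exists_inP; exists v => //; apply: cls_mem.
Qed.

Lemma inv_init : Inv ([set s] :: [seq Qa a | a <- enum 'I_k]) [:: [set: Q]].
Proof.
split.
- move=> y; case: (eqVneq y s) => [->|ys].
    by exists [set s]; rewrite ?inE ?eqxx.
  have [u [a yu]] := has_pred ys.
  exists (Qa a); last by rewrite inE (lab_delta yu).
  by rewrite in_cons; apply/orP; right; apply/mapP; exists a; rewrite ?mem_enum.
- move=> D /init_mem [->|[a ->]] x y.
    by move=> /set1P -> /set1P ->.
  by rewrite !inE => /eqP -> /eqP ->.
- move=> D E /init_mem [->|[a ->]] /init_mem [->|[b ->]] y.
  + by [].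
  + by move=> /set1P ->; rewrite inE lab_s.
  + by move=> H /set1P Ey; move: H; rewrite Ey inE lab_s.
  + by rewrite !inE => /eqP -> /eqP [->].
- move=> D /init_mem [->|[a ->]] x y.
    by move=> /set1P -> /esym /cls_s ->; rewrite inE.
  rewrite !inE => /eqP lx e; have [u xu] := lab_some lx.
  have : x \in dset delta a [set: Q] by apply/bigcupP; exists u; rewrite ?inE.
  move=> /(dset_closed closedT e) /bigcupP [u' _ yu'].
  by rewrite (lab_delta yu').
- by move=> S; rewrite inE => /eqP ->; apply: closedT.
- by move=> S D; rewrite inE => /eqP -> _ y _ _; apply: subsetT.
- move=> D S /init_mem [->|[b ->]]; rewrite inE => /eqP -> x z a.
    by move=> /set1P -> /set1P ->.
  rewrite !inE => /eqP lx /eqP lz; rewrite lx => -[ab] _.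
  have [u zu] := lab_some lz; apply/bigcupP; exists u; first by rewrite inE.
  by rewrite -ab.
- rewrite /= pairwise_map; apply/andP; split.
    by apply/allP => D /mapP [a _ ->]; apply: rr_s.
  have : pairwise (relpre val ltn) (enum 'I_k).
    by rewrite -pairwise_map val_enum_ord -sorted_pairwise ?iota_ltn_sorted //; apply: ltn_trans.
  by apply: sub_pairwise => a b /= ab; apply: rr_ab.
Qed.


Lemma head_dec (T : eqType) (p : pred T) (x0 : T) (l : seq T) : has p l ->
  exists s1 s2, [/\ l = s1 ++ head x0 (filter p l) :: s2, ~~ has p s1 & p (head x0 (filter p l))].
Proof.
elim: l => //= x l IH; case px: (p x) => /=.
  by move=> _; exists [::], l; rewrite px.
move=> /IH [s1 [s2 [E h1 h2]]]; exists (x :: s1), s2; split => //=.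
  by rewrite {1}E.
by rewrite px.
Qed.

Lemma last_dec (T : eqType) (p : pred T) (x0 : T) (l : seq T) : has p l ->
  exists s1 s2, [/\ l = s1 ++ last x0 (filter p l) :: s2, ~~ has p s2 & p (last x0 (filter p l))].
Proof.
elim/last_ind: l => //= l x IH; rewrite filter_rcons has_rcons.
case px: (p x) => /=.
  by move=> _; exists l, [::]; rewrite last_rcons cats1.
move=> /IH [s1 [s2 [E h1 h2]]]; exists s1, (rcons s2 x); split => //.
  by rewrite {1}E rcons_cat.
by rewrite has_rcons px.
Qed.

Lemma rrI (X Y : {set Q}) : (forall u v, u \in X -> v \in Y -> prec (cls u) (cls v)) -> rr X Y.
Proof. by move=> H; apply/forall_inP => u uX; apply/forall_inP => v vY; apply: H. Qed.

Lemma rrE (X Y : {set Q}) u v : rr X Y -> u \in X -> v \in Y -> prec (cls u) (cls v).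
Proof. by move=> /forall_inP H /H /forall_inP H' /H'. Qed.

Lemma rr_sub (D E D' E' : {set Q}) : D' \subset D -> E' \subset E -> rr D E -> rr D' E'.
Proof.
move=> s1 s2 H; apply: rrI => u v uD vE; apply: (rrE H).
  exact: (subsetP s1). exact: (subsetP s2).
Qed.

Lemma rr0l E : rr set0 E. Proof. by apply: rrI => u v; rewrite inE. Qed.
Lemma rr0r E : rr E set0. Proof. by apply: rrI => u v _; rewrite inE. Qed.

Lemma pairwise_flat (f : {set Q} -> seq {set Q}) (P : seq {set Q}) :
  pairwise rr P -> (forall D, D \in P -> pairwise rr (f D)) ->
  (forall D D', D' \in f D -> D' \subset D) -> pairwise rr (flatten (map f P)).
Proof.
move=> + + fsub; elim: P => //= D P IH /andP [hD hP] hf.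
rewrite pairwise_cat; apply/and3P; split.
- apply/allrelP => D' E' D'f /flatten_mapP [E EP E'f].
  apply: rr_sub (fsub _ _ D'f) (fsub _ _ E'f) _.
  by move/allP: hD; apply.
- by apply: hf; rewrite inE eqxx.
- by apply: IH => // E EP; apply: hf; rewrite inE EP orbT.
Qed.

Lemma dsetS a (A B : {set Q}) : A \subset B -> dset delta a A \subset dset delta a B.
Proof.
move=> AB; apply/subsetP => x /bigcupP [u uA xu]; apply/bigcupP; exists u => //.
exact: (subsetP AB).
Qed.

Lemma dset_split a (B S : {set Q}) z : z \in dset delta a S -> z \notin dset delta a B ->
  z \in dset delta a (S :\: B).
Proof.
move=> /bigcupP [u uS zu] zB; apply/bigcupP; exists u => //; rewrite inE uS andbT.
by apply: contra zB => uB; apply/bigcupP; exists u.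
Qed.

Lemma plab_lab (D : {set Q}) x : (forall x y, x \in D -> y \in D -> lab delta x = lab delta y) ->
  x \in D -> plab delta D = lab delta x.
Proof.
move=> U xD; rewrite /plab; case: pickP => [y yD|/(_ x)]; last by rewrite xD.
exact: U.
Qed.

Lemma split_mem b (B S D D' : {set Q}) : D' \in split_part delta b B S D ->
  [\/ D' = (D :&: dlab delta D B) :\: ((D :&: dlab delta D B) :&: dlab delta D (S :\: B)),
      D' = (D :&: dlab delta D B) :&: dlab delta D (S :\: B) |
      D' = D :\: (D :&: dlab delta D B)].
Proof.
rewrite /split_part mem_filter => /andP [_]; case: b; rewrite !inE => /or3P [] /eqP ->;
by [apply: Or31 | apply: Or32 | apply: Or33].
Qed.

Lemma split_sub b (B S D D' : {set Q}) : D' \in split_part delta b B S D -> D' \subset D.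
Proof.
case/split_mem => ->; apply/subsetP => y; rewrite !inE.
- by case/andP => _ /andP [].
- by case/andP => /andP [].
- by case/andP.
Qed.

Lemma split_cov b (B S D : {set Q}) y : y \in D -> exists2 D', D' \in split_part delta b B S D & y \in D'.
Proof.
move=> yD; rewrite /split_part.
set D1 := D :&: dlab delta D B.
set D11 := D1 :&: dlab delta D (S :\: B).
have H : forall E : {set Q}, y \in E -> E \in [:: D1 :\: D11; D11; D :\: D1] ->
  exists2 D', D' \in [seq E <- (if b then [:: D1 :\: D11; D11; D :\: D1] else [:: D :\: D1; D11; D1 :\: D11]) | E != set0] & y \in D'.
  move=> E yE EL; exists E => //; rewrite mem_filter; apply/andP; split.
    by apply/set0Pn; exists y.
  by case: b; move: EL; rewrite !inE; case/or3P => ->; rewrite ?orbT.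
case yD1: (y \in D1); [case yD11: (y \in D11)|].
- apply: (H D11) => //; by rewrite !inE eqxx ?orbT.
- apply: (H (D1 :\: D11)); first by rewrite in_setD yD11 yD1.
  by rewrite !inE eqxx.
- apply: (H (D :\: D1)); first by rewrite in_setD yD1 yD.
  by rewrite !inE eqxx ?orbT.
Qed.

Lemma split_disj b (B S D D' E' : {set Q}) y : D' \in split_part delta b B S D ->
  E' \in split_part delta b B S D -> y \in D' -> y \in E' -> D' = E'.
Proof.
by case/split_mem => ->; case/split_mem => ->; rewrite !inE //;
  case: (y \in D); case: (y \in dlab delta D B); case: (y \in dlab delta D (S :\: B)).
Qed.


Lemma order_first P X S B s1 s2 : Inv P X -> S \in X -> P = s1 ++ B :: s2 ->
  ~~ has (fun D : {set Q} => D \subset S) s1 ->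
  forall p q, p \in B -> q \in S -> q \notin B -> prec (cls p) (cls q).
Proof.
move=> I SX EP h1 p q pB qS qB.
have [D DP qD] := i_cov I q.
have DS := i_SX I SX DP qS qD.
move: (i_O I); rewrite EP pairwise_cat /= => /and3P [_ _ /andP [/allP hB _]].
move: DP; rewrite EP mem_cat in_cons => /or3P [D1|/eqP DB|D2].
- by move/hasP: h1; case; exists D.
- by rewrite -DB qD in qB.
- exact: rrE (hB _ D2) pB qD.
Qed.

Lemma order_last P X S B s1 s2 : Inv P X -> S \in X -> P = s1 ++ B :: s2 ->
  ~~ has (fun D : {set Q} => D \subset S) s2 ->
  forall p q, p \in B -> q \in S -> q \notin B -> prec (cls q) (cls p).
Proof.
move=> I SX EP h2 p q pB qS qB.
have [D DP qD] := i_cov I q.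
have DS := i_SX I SX DP qS qD.
move: (i_O I); rewrite EP pairwise_cat /= => /and3P [/allrelP hA _ _].
move: DP; rewrite EP mem_cat in_cons => /or3P [D1|/eqP DB|D2].
- by apply: rrE (hA _ _ D1 _) qD pB; rewrite inE eqxx.
- by rewrite -DB qD in qB.
- by move/hasP: h2; case; exists D.
Qed.

Lemma closed_dlab (D T : {set Q}) : closed T -> closed (dlab delta D T).
Proof.
move=> cT; rewrite /dlab; case: (plab delta D) => [a|]; last exact: closed0.
by move=> x y xT e; apply: dset_closed e xT.
Qed.

Lemma within P X b (B S D : {set Q}) : Inv P X -> S \in X -> B \in P -> B \subset S ->
  (forall p q, p \in (if b then B else S :\: B) -> q \in (if b then S :\: B else B) ->
     prec (cls p) (cls q)) ->
  D \in P -> pairwise rr (split_part delta b B S D).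
Proof.
move=> I hS hBP hBS hLH hD.
have cB : closed B := i_R I hBP.
have cSB : closed (S :\: B) := closedD (i_RX I hS) cB.
rewrite /split_part; apply: pairwise_filter.
rewrite /dlab; case pl: (plab delta D) => [a|]; last first.
  by rewrite !setI0 set0D setD0; case: b {hLH} => /=; rewrite ?rr0l ?rr0r.
have hSt : forall x y, x \in D -> x \in dset delta a B -> y \in D ->
    y \notin dset delta a B -> y \in dset delta a (S :\: B).
  move=> x y xD xB yD ynB; apply: dset_split ynB.
  apply: (i_St I hD hS xD yD); last exact: (subsetP (dsetS a hBS)).
  by rewrite -(plab_lab (i_U I hD) xD).
case: b hLH => /= hLH; rewrite !andbT -andbA; apply/and3P; split; apply: rrI => u v; rewrite !inE.
- move=> /andP [nu /andP [uD uB]] /andP [/andP [vD vB] vSB].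
  have uSB : u \notin dset delta a (S :\: B) by apply: contra nu => H; rewrite uD uB H.
  apply: (core_set uB vSB hLH); rewrite eq_sym; exact: dset_closed_neq cSB vSB uSB.
- move=> /andP [nu /andP [uD uB]] /andP [nv vD].
  have vnB : v \notin dset delta a B by apply: contra nv => H; rewrite vD H.
  apply: (core_set uB (hSt u v uD uB vD vnB) hLH); exact: dset_closed_neq cB uB vnB.
- move=> /andP [/andP [uD uB] uSB] /andP [nv vD].
  have vnB : v \notin dset delta a B by apply: contra nv => H; rewrite vD H.
  apply: (core_set uB (hSt u v uD uB vD vnB) hLH); exact: dset_closed_neq cB uB vnB.
- move=> /andP [nu uD] /andP [/andP [vD vB] vSB].
  have unB : u \notin dset delta a B by apply: contra nu => H; rewrite uD H.
  apply: (core_set (hSt v u vD vB uD unB) vB hLH); rewrite eq_sym; exact: dset_closed_neq cB vB unB.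
- move=> /andP [nu uD] /andP [nv /andP [vD vB]].
  have unB : u \notin dset delta a B by apply: contra nu => H; rewrite uD H.
  apply: (core_set (hSt v u vD vB uD unB) vB hLH); rewrite eq_sym; exact: dset_closed_neq cB vB unB.
- move=> /andP [/andP [uD uB] uSB] /andP [nv /andP [vD vB]].
  have vnSB : v \notin dset delta a (S :\: B) by apply: contra nv => H; rewrite vD vB H.
  apply: (core_set uSB vB hLH); exact: dset_closed_neq cSB uSB vnSB.
Qed.

Lemma step_gen P X b i (S B : {set Q}) : Inv P X -> S \in X -> B \in P -> B \subset S ->
  (forall p q, p \in (if b then B else S :\: B) -> q \in (if b then S :\: B else B) ->
     prec (cls p) (cls q)) ->
  Inv (flatten [seq split_part delta b B S D | D <- P])
      (take i X ++ (if b then [:: B; S :\: B] else [:: S :\: B; B]) ++ drop i.+1 X).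
Proof.
move=> I hS hBP hBS hLH.
have cB : closed B := i_R I hBP.
have cSB : closed (S :\: B) := closedD (i_RX I hS) cB.
set newX := _ ++ _.
have memX : forall S', S' \in newX -> [\/ S' \in X, S' = B | S' = S :\: B].
  move=> S'; rewrite !mem_cat => /or3P [/mem_take H|H|/mem_drop H]; try exact: Or31.
  by case: b H {hLH newX}; rewrite !inE => /orP [] /eqP ->; [apply: Or32|apply: Or33|apply: Or33|apply: Or32].
split.
- move=> y; have [D DP yD] := i_cov I y.
  have [D' D'D yD'] := split_cov b B S yD.
  by exists D' => //; apply/flatten_mapP; exists D.
- move=> D' /flatten_mapP [D DP D'D] x y xD yD.
  have sub := split_sub D'D.
  by apply: (i_U I DP); apply: (subsetP sub).
- move=> D' E' /flatten_mapP [D DP D'D] /flatten_mapP [E EP E'E] y yD yE.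
  have ED : D = E := i_Dj I DP EP (subsetP (split_sub D'D) _ yD) (subsetP (split_sub E'E) _ yE).
  by subst E; apply: split_disj D'D E'E yD yE.
- move=> D' /flatten_mapP [D DP D'D].
  have cD := i_R I DP.
  have c1 := closedI cD (closed_dlab (D:=D) cB).
  have c2 := closedI c1 (closed_dlab (D:=D) cSB).
  by case/split_mem: D'D => ->; [exact: closedD c1 c2|exact: c2|exact: closedD cD c1].
- by move=> S' /memX [H|->|->] //; apply: (i_RX I).
- move=> S' D' /memX hS' /flatten_mapP [D DP D'D] y yS yD.
  have sub := split_sub D'D.
  have yD0 := subsetP sub _ yD.
  case: hS' yS => [H|->|->] yS.
  + by apply: subset_trans sub (i_SX I H DP yS yD0).
  + by rewrite -(i_Dj I DP hBP yD0 yS).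
  + have DS := i_SX I hS DP (subsetP (subsetDl S B) _ yS) yD0.
    apply/subsetP => z zD'; have zD := subsetP sub _ zD'.
    rewrite inE (subsetP DS _ zD) andbT; apply/negP => zB.
    have DB := i_Dj I DP hBP zD zB; subst D.
    by move: yS; rewrite inE yD0.
- move=> D' S' /flatten_mapP [D DP D'D] /memX hS' x z a xD' zD' lx.
  have sub := split_sub D'D.
  have xD := subsetP sub _ xD'; have zD := subsetP sub _ zD'.
  have pl : plab delta D = Some a by rewrite (plab_lab (i_U I DP) xD).
  have dl : forall T, dlab delta D T = dset delta a T by move=> T; rewrite /dlab pl.
  case: hS' => [H|->|->].
  + exact: (i_St I DP H xD zD lx).
  + by case/split_mem: D'D xD' zD' => ->; rewrite !inE !dl ?xD ?zD //=;
      case: (x \in dset delta a B); case: (z \in dset delta a B); rewrite //= ?andbF.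
  + move=> xSB.
    have xS : x \in dset delta a S by apply: (subsetP (dsetS a (subsetDl S B))).
    have zS := i_St I DP hS xD zD lx xS.
    case/split_mem: D'D xD' zD' => ->; rewrite !inE !dl ?xD ?zD ?xSB //= !andbT.
    * by rewrite andNb.
    * by move=> _ /andP [_ ->].
    * by move=> _ zB; apply: dset_split zS zB.
- apply: pairwise_flat (i_O I) _ _.
    by move=> D DP; apply: (within I hS hBP hBS hLH DP).
  by move=> D D'; apply: split_sub.
Qed.

Lemma inv_step P X P1 X1 : Inv P X -> opr_step delta (P, X) (P1, X1) -> Inv P1 X1.
Proof.
move=> I [b] /= [_ iX _ [-> ->]].
set i := find (multi P) X. set S := nth set0 X i.
set C := [seq D <- P | (D : {set Q}) \subset S].
have hS : S \in X by apply: mem_nth.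
have hm : multi P S by apply: nth_find; rewrite has_find.
have hhas : has (fun D : {set Q} => D \subset S) P.
  move: hm => /andP [_ c]; rewrite has_count; exact: ltn_trans c.
case: b.
- have [s1 [s2 [EP h1 hBS]]] := head_dec set0 hhas.
  apply: step_gen => //.
  + by rewrite {1}EP mem_cat; apply/orP; right; apply: mem_head.
  + move=> p q /= pB; rewrite inE => /andP [qB qS].
    exact: order_first I hS EP h1 p q pB qS qB.
- have [s1 [s2 [EP h2 hBS]]] := last_dec set0 hhas.
  apply: step_gen => //.
  + by rewrite {1}EP mem_cat; apply/orP; right; apply: mem_head.
  + move=> p q /=; rewrite inE => /andP [pB pS] qB.
    exact: order_last I hS EP h2 q p qB pS pB.
Qed.

Lemma reach_inv st : opr_reach delta s st -> Inv st.1 st.2.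
Proof.
elim => [|[P X] [P1 X1] _ IH H]; first exact: inv_init.
exact: inv_step IH H.
Qed.

End L11.

Unset Implicit Arguments.

Theorem lemma11 (k : nat) (Q : finType) (delta : Q -> 'I_k -> {set Q}) (s : Q) :
  standing_assumptions delta s ->
  quasi_wheeler delta s ->
  forall P' : {set {set Q}}, coarsest_fsp delta P' ->
  forall (P X : seq {set Q}), opr_reach delta s (P, X) ->
  forall (i j : nat), i < j -> j < size P ->
  forall u v : Q, u \in nth set0 P i -> v \in nth set0 P j ->
  forall prec : rel {set Q}, wheeler_order_quotient delta s P' prec ->
    prec (pblock P' u) (pblock P' v).
Proof.
move=> HSA _ P' [HP HFS _] P X Hr i j ij jP u v uP vP prec HW.
have I := reach_inv HSA HP HFS HW Hr.
have /pairwiseP H := i_O I.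
have := H set0 i j; rewrite !inE => /(_ (ltn_trans ij jP) jP ij) Hr'.
exact: rrE Hr' uP vP.
Qed.
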